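(* A regulator splits new bandwidth $B\ge 0$ between two SPs as $B_1^n,B_2^n\ge0$ with $B_1^n+B_2^n=B$; SP $i$ then has total bandwidth $B_i=B_i^o+B_i^n$ and must satisfy $B_{i,S}\ge B_{i,S}^0:=B_i^n$. For this split, let $\mathrm{SW}_{\mathrm{wo}}^*$ be the maximal social welfare over all allocations with $B_{i,S}\in[0,B_i]$; $\mathrm{SW}_{\mathrm{w}}^*$ the maximal social welfare over allocations with $B_{i,S}\in[B_i^n,B_i]$; and $\mathrm{SW}_{\mathrm{w}}^{\mathrm{NE}}$ the social welfare at the unique Nash equilibrium of the constrained two-SP bandwidth game. Let $T=\frac{(B_1^o+B_2^o)N_f\epsilon}{N_m}$. Then: 1. If $B>T$, then $\mathrm{SW}_{\mathrm{w}}^{\mathrm{NE}}\le\mathrm{SW}_{\mathrm{w}}^*<\mathrm{SW}_{\mathrm{wo}}^*$, and $\mathrm{SW}_{\mathrm{w}}^{\mathrm{NE}}=\mathrm{SW}_{\mathrm{w}}^*$ if and only if $\frac{\partial S_i}{\partial B_{i,S}}\le 0$ for $i=1,2$ when evaluated at the profile $(B_{1,S},B_{2,S})=(B_1^n,B_2^n)$, i.e. iff for $i=1,2$ $$\lambda_S(R_S^0)^{-\alpha}-(R_M^0)^{-\alpha}-\frac{\alpha\lambda_S^2B_i^nR_0}{N_f}(R_S^0)^{-\alpha-1}+\frac{\alpha B_i^oR_0}{N_m}(R_M^0)^{-\alpha-1}\le 0,$$ where $R_S^0=\frac{\lambda_S(B_1^n+B_2^n)R_0}{N_f}$ and $R_M^0=\frac{(B_1^o+B_2^o)R_0}{N_m}$.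 2. If $B\le T$, then $\mathrm{SW}_{\mathrm{w}}^{\mathrm{NE}}\le\mathrm{SW}_{\mathrm{w}}^*=\mathrm{SW}_{\mathrm{wo}}^*$, and $\mathrm{SW}_{\mathrm{w}}^{\mathrm{NE}}=\mathrm{SW}_{\mathrm{wo}}^*$ if and only if $$B_1^n\in\Big[B-\frac{B_2^oN_f\epsilon}{N_m},\ \frac{B_1^oN_f\epsilon}{N_m}\Big],\qquad B_2^n=B-B_1^n.$$
   Context: Fixed parameters: $\alpha\in(0,1)$; densities $N_m>0$ (mobile users) and $N_f>0$ (fixed users); spectral efficiency $R_0>0$; common small-cell density $\lambda_S>1$ (macro density normalized to 1); initial bandwidths $B_1^o,B_2^o>0$, usable for either macro- or small-cells; the new bandwidth may be used only for small-cells. Utility $u(r)=\frac{r^{1-\alpha}}{1-\alpha}$, $u'(r)=r^{-\alpha}$. Let $\epsilon=\lambda_S^{1/\alpha-1}$. Two-SP bandwidth game with totals $B_i$ and lower bounds $B_{i,S}^0$: SP $i$ chooses $B_{i,S}\in[B_{i,S}^0,B_i]$, $B_{i,M}=B_i-B_{i,S}$; average rates at market-clearing prices (mobile users on macro-cells, fixed users on small-cells) are $R_S=\frac{\lambda_S(B_{1,S}+B_{2,S})R_0}{N_f}$, $R_M=\frac{(B_{1,M}+B_{2,M})R_0}{N_m}$; SP $i$'s revenue is $S_i=R_0B_{i,M}R_M^{-\alpha}+R_0\lambda_SB_{i,S}R_S^{-\alpha}$ (zero-bandwidth terms are $0$). This game has a unique pure Nash equilibrium. Social welfare of a profile is $\mathrm{SW}=N_m\,u(R_M)+N_f\,u(R_S)$.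 *)

(* Defs.v *)
From Stdlib Require Import Reals Lra.
Open Scope R_scope.

(* r^a for r > 0; convention: value 0 when r <= 0.  It is only applied
   (i) with a = 1 - alpha > 0 (utility, where 0^(1-alpha) = 0 is the true value),
   (ii) with a = -alpha, always multiplied by a bandwidth, so that
        zero-bandwidth revenue terms are 0 as in the paper. *)
Definition rpow (r a : R) : R := if Rlt_dec 0 r then Rpower r a else 0.

Definition u (alpha r : R) : R := rpow r (1 - alpha) / (1 - alpha).

Definition eps (alpha lamS : R) : R := Rpower lamS (1 / alpha - 1).

(* Average rates for a profile; x1 x2 = small-cell bandwidths B_{i,S},
   B1 B2 = total bandwidths B_i, so B_{i,M} = B_i - x_i. *)
Definition RS (Nf R0 lamS x1 x2 : R) : R := lamS * (x1 + x2) * R0 / Nf.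
Definition RM (Nm R0 B1 B2 x1 x2 : R) : R := ((B1 - x1) + (B2 - x2)) * R0 / Nm.

Definition SW (alpha Nm Nf R0 lamS B1 B2 x1 x2 : R) : R :=
  Nm * u alpha (RM Nm R0 B1 B2 x1 x2) + Nf * u alpha (RS Nf R0 lamS x1 x2).

Definition S1 (alpha Nm Nf R0 lamS B1 B2 x1 x2 : R) : R :=
  R0 * (B1 - x1) * rpow (RM Nm R0 B1 B2 x1 x2) (- alpha)
  + R0 * lamS * x1 * rpow (RS Nf R0 lamS x1 x2) (- alpha).
Definition S2 (alpha Nm Nf R0 lamS B1 B2 x1 x2 : R) : R :=
  R0 * (B2 - x2) * rpow (RM Nm R0 B1 B2 x1 x2) (- alpha)
  + R0 * lamS * x2 * rpow (RS Nf R0 lamS x1 x2) (- alpha).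

Definition feasible (B1 B2 l1 l2 x1 x2 : R) : Prop :=
  l1 <= x1 <= B1 /\ l2 <= x2 <= B2.

Definition is_max_SW (alpha Nm Nf R0 lamS B1 B2 l1 l2 M : R) : Prop :=
  (exists x1 x2, feasible B1 B2 l1 l2 x1 x2 /\
                 SW alpha Nm Nf R0 lamS B1 B2 x1 x2 = M) /\
  (forall x1 x2, feasible B1 B2 l1 l2 x1 x2 ->
                 SW alpha Nm Nf R0 lamS B1 B2 x1 x2 <= M).

Definition isNE (alpha Nm Nf R0 lamS B1 B2 l1 l2 x1 x2 : R) : Prop :=
  feasible B1 B2 l1 l2 x1 x2 /\
  (forall y, l1 <= y <= B1 ->
     S1 alpha Nm Nf R0 lamS B1 B2 y x2 <= S1 alpha Nm Nf R0 lamS B1 B2 x1 x2) /\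
  (forall y, l2 <= y <= B2 ->
     S2 alpha Nm Nf R0 lamS B1 B2 x1 y <= S2 alpha Nm Nf R0 lamS B1 B2 x1 x2).

(* The marginal-revenue expression dS_i/dB_{i,S} at (B_1^n, B_2^n), as in the paper. *)
Definition dSi (alpha Nm Nf R0 lamS B1o B2o B1n B2n Bio Bin : R) : R :=
  let RS0 := lamS * (B1n + B2n) * R0 / Nf in
  let RM0 := (B1o + B2o) * R0 / Nm in
  lamS * Rpower RS0 (- alpha) - Rpower RM0 (- alpha)
  - alpha * lamS ^ 2 * Bin * R0 / Nf * Rpower RS0 (- alpha - 1)
  + alpha * Bio * R0 / Nm * Rpower RM0 (- alpha - 1).

(* Main.v *)
Require Import Defs.
From Stdlib Require Import Reals Lra.
Open Scope R_scope.

Lemma Rpower_pos' x a : 0 < Rpower x a.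
Proof. unfold Rpower; apply exp_pos. Qed.

Lemma Rpower_neg_decr x y a : 0 < x -> x < y -> 0 < a -> Rpower y (-a) < Rpower x (-a).
Proof.
  intros. rewrite !Rpower_Ropp. apply Rinv_lt_contravar.
  apply Rmult_lt_0_compat; apply Rpower_pos'.
  apply Rlt_Rpower_l; lra.
Qed.

Lemma Rpower_neg_decr_le x y a : 0 < x -> x <= y -> 0 < a -> Rpower y (-a) <= Rpower x (-a).
Proof.
  intros. destruct (Req_dec x y). subst; lra. left; apply Rpower_neg_decr; lra.
Qed.

Lemma rpow_pos x a : 0 < x -> rpow x a = Rpower x a.
Proof. intros; unfold rpow; destruct (Rlt_dec 0 x); lra. Qed.

Lemma rpow_nonpos x a : x <= 0 -> rpow x a = 0.
Proof. intros; unfold rpow; destruct (Rlt_dec 0 x); lra. Qed.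

Lemma Rpower_m1 r a : 0 < r -> Rpower r (-a-1) = Rpower r (-a) / r.
Proof.
  intros. replace (-a-1) with (-a + - (1)) by ring. rewrite Rpower_plus, (Rpower_Ropp r 1), Rpower_1 by lra.
  unfold Rdiv; auto.
Qed.

Lemma small_P a K : 0 < a -> exists z0, 0 < z0 /\ forall z, 0 < z <= z0 -> K < Rpower z (-a).
Proof.
  intros Ha. set (K' := Rmax K 0 + 1).
  assert (HK' : 0 < K') by (unfold K'; generalize (Rmax_r K 0); lra).
  exists (Rpower K' (-(1/a))). split. apply Rpower_pos'.
  intros z [Hz1 Hz2].
  assert (E : Rpower (Rpower K' (-(1/a))) (-a) = K').
  { rewrite Rpower_mult. replace (-(1/a) * -a) with 1 by (field; lra). apply Rpower_1; lra. }
  assert (K < K') by (unfold K'; generalize (Rmax_l K 0); lra).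
  apply Rlt_le_trans with K'; auto. rewrite <- E. apply Rpower_neg_decr_le; lra.
Qed.

Lemma dlin c1 c2 y : derivable_pt_lim (fun z => c1 + c2 * z) y c2.
Proof.
  intros e He. exists (mkposreal 1 Rlt_0_1). intros h Hh _.
  replace ((c1 + c2 * (y + h) - (c1 + c2 * y)) / h - c2) with 0 by (field; auto).
  rewrite Rabs_R0; auto.
Qed.

Lemma dlin_pow c1 c2 d1 d2 e y : 0 < d1 + d2 * y ->
  derivable_pt_lim (fun z => (c1 + c2 * z) * Rpower (d1 + d2 * z) e) y
    (c2 * Rpower (d1 + d2 * y) e + (c1 + c2 * y) * (e * Rpower (d1 + d2 * y) (e - 1) * d2)).
Proof.
  intros H.
  assert (H2 : derivable_pt_lim (comp (fun x => Rpower x e) (fun z => d1 + d2 * z)) y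
           (e * Rpower (d1 + d2 * y) (e - 1) * d2)).
  { apply derivable_pt_lim_comp. apply dlin. apply derivable_pt_lim_power; auto. }
  pose proof (derivable_pt_lim_mult _ _ _ _ _ (dlin c1 c2 y) H2) as H3.
  eapply derivable_pt_lim_ext; [| exact H3]. intros z; reflexivity.
Qed.

Lemma pow_tangent b r r0 : 0 < b < 1 -> 0 < r0 -> 0 <= r -> r <> r0 ->
  rpow r b < Rpower r0 b + b * Rpower r0 (b - 1) * (r - r0).
Proof.
  intros Hb Hr0 Hr Hne. destruct Hr as [Hr | Hr].
  - rewrite rpow_pos by auto.
    assert (D : forall c, 0 < c -> derivable_pt_lim (fun x => Rpower x b) c (b * Rpower c (b - 1))).
    { intros; apply derivable_pt_lim_power; auto. }
    destruct (Rlt_dec r r0) as [Hlt | Hge].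
    + destruct (MVT_cor2 (fun x => Rpower x b) (fun c => b * Rpower c (b-1)) r r0 Hlt)
        as [c [Hc1 Hc2]]. { intros; apply D; lra. }
      assert (Rpower r0 (b-1) < Rpower c (b-1)).
      { replace (b-1) with (-(1-b)) by ring. apply Rpower_neg_decr; lra. }
      assert (0 < r0 - r) by lra.
      assert (b * Rpower r0 (b - 1) * (r0 - r) < b * Rpower c (b - 1) * (r0 - r)).
      { apply Rmult_lt_compat_r; auto. apply Rmult_lt_compat_l; lra. }
      nra.
    + assert (Hlt : r0 < r) by lra.
      destruct (MVT_cor2 (fun x => Rpower x b) (fun c => b * Rpower c (b-1)) r0 r Hlt)
        as [c [Hc1 Hc2]]. { intros; apply D; lra. }
      assert (Rpower c (b-1) < Rpower r0 (b-1)).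
      { replace (b-1) with (-(1-b)) by ring. apply Rpower_neg_decr; lra. }
      assert (0 < r - r0) by lra.
      assert (b * Rpower c (b - 1) * (r - r0) < b * Rpower r0 (b - 1) * (r - r0)).
      { apply Rmult_lt_compat_r; auto. apply Rmult_lt_compat_l; lra. }
      nra.
  - subst r. rewrite rpow_nonpos by lra.
    assert (E : Rpower r0 (b - 1) * r0 = Rpower r0 b).
    { replace (b-1) with (b + - (1)) by ring. rewrite Rpower_plus, (Rpower_Ropp r0 1), Rpower_1 by lra.
      field. lra. }
    assert (0 < Rpower r0 b) by apply Rpower_pos'.
    replace (b * Rpower r0 (b - 1) * (0 - r0)) with (- b * (Rpower r0 (b - 1) * r0)) by ring.
    rewrite E. nra.
Qed.

Lemma u_tangent a r r0 : 0 < a < 1 -> 0 < r0 -> 0 <= r -> r <> r0 ->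
  u a r < u a r0 + Rpower r0 (-a) * (r - r0).
Proof.
  intros Ha Hr0 Hr Hne. unfold u.
  pose proof (pow_tangent (1-a) r r0 ltac:(lra) Hr0 Hr Hne) as H.
  rewrite (rpow_pos r0) by auto.
  replace (1 - a - 1) with (-a) in H by ring.
  apply Rmult_lt_reg_r with (1 - a). lra.
  replace ((Rpower r0 (1 - a) / (1 - a) + Rpower r0 (- a) * (r - r0)) * (1 - a))
    with (Rpower r0 (1 - a) + (1-a) * Rpower r0 (- a) * (r - r0)) by (field; lra).
  replace (rpow r (1 - a) / (1 - a) * (1 - a)) with (rpow r (1-a)) by (field; lra).
  exact H.
Qed.

Definition phi a Nm Nf R0 lamS Bt s :=
  lamS * Rpower (lamS * s * R0 / Nf) (-a) - Rpower ((Bt - s) * R0 / Nm) (-a).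

Lemma SW_tangent a Nm Nf R0 lamS B1 B2 x1 x2 y1 y2 :
  0 < a < 1 -> 0 < Nm -> 0 < Nf -> 0 < R0 -> 1 < lamS ->
  0 < x1 + x2 < B1 + B2 -> 0 <= y1 + y2 <= B1 + B2 -> y1 + y2 <> x1 + x2 ->
  SW a Nm Nf R0 lamS B1 B2 y1 y2 <
  SW a Nm Nf R0 lamS B1 B2 x1 x2 + R0 * ((y1+y2) - (x1+x2)) * phi a Nm Nf R0 lamS (B1+B2) (x1+x2).
Proof.
  intros Ha HNm HNf HR0 Hl Hx Hy Hne. unfold SW, phi, RM, RS.
  set (sx := x1 + x2) in *. set (sy := y1 + y2) in *.
  replace (B1 - x1 + (B2 - x2)) with (B1 + B2 - sx) by (unfold sx; ring).
  replace (B1 - y1 + (B2 - y2)) with (B1 + B2 - sy) by (unfold sy; ring).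
  assert (T1 := u_tangent a ((B1 + B2 - sy) * R0 / Nm) ((B1 + B2 - sx) * R0 / Nm) Ha).
  assert (T2 := u_tangent a (lamS * sy * R0 / Nf) (lamS * sx * R0 / Nf) Ha).
  assert (Hrm : 0 < (B1 + B2 - sx) * R0 / Nm) by (apply Rdiv_lt_0_compat; [repeat apply Rmult_lt_0_compat|]; lra).
  assert (Hrs : 0 < lamS * sx * R0 / Nf) by (apply Rdiv_lt_0_compat; [repeat apply Rmult_lt_0_compat|]; lra).
  specialize (T1 Hrm). specialize (T2 Hrs).
  assert (0 <= (B1 + B2 - sy) * R0 / Nm) by (unfold Rdiv; apply Rmult_le_pos; [nra| left; apply Rinv_0_lt_compat; lra]).
  assert (0 <= lamS * sy * R0 / Nf) by (unfold Rdiv; apply Rmult_le_pos; [apply Rmult_le_pos; [apply Rmult_le_pos|]; lra| left; apply Rinv_0_lt_compat; lra]).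
  assert (N1 : (B1 + B2 - sy) * R0 / Nm <> (B1 + B2 - sx) * R0 / Nm).
  { intro E. apply Hne. apply (f_equal (fun t => t * Nm / R0)) in E. field_simplify in E; lra. }
  assert (N2 : lamS * sy * R0 / Nf <> lamS * sx * R0 / Nf).
  { intro E. apply Hne. apply (f_equal (fun t => t * Nf / R0 / lamS)) in E. field_simplify in E; lra. }
  specialize (T1 ltac:(auto) N1). specialize (T2 ltac:(auto) N2).
  set (A := Rpower ((B1 + B2 - sx) * R0 / Nm) (- a)) in *.
  set (C := Rpower (lamS * sx * R0 / Nf) (- a)) in *.
  assert (E1 : Nm * (A * ((B1 + B2 - sy) * R0 / Nm - (B1 + B2 - sx) * R0 / Nm)) = - R0 * (sy - sx) * A) by (field; lra).
  assert (E2 : Nf * (C * (lamS * sy * R0 / Nf - lamS * sx * R0 / Nf)) = R0 * (sy - sx) * lamS * C) by (field; lra).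
  nra.
Qed.

Lemma phi_decr a Nm Nf R0 lamS Bt s1 s2 :
  0 < a < 1 -> 0 < Nm -> 0 < Nf -> 0 < R0 -> 1 < lamS ->
  0 < s1 -> s1 < s2 -> s2 < Bt -> phi a Nm Nf R0 lamS Bt s2 < phi a Nm Nf R0 lamS Bt s1.
Proof.
  intros. unfold phi.
  assert (Rpower (lamS * s2 * R0 / Nf) (- a) < Rpower (lamS * s1 * R0 / Nf) (- a)).
  { apply Rpower_neg_decr; try lra.
    apply Rdiv_lt_0_compat; [repeat apply Rmult_lt_0_compat|]; lra.
    unfold Rdiv. apply Rmult_lt_compat_r. apply Rinv_0_lt_compat; lra.
    apply Rmult_lt_compat_r; try lra. apply Rmult_lt_compat_l; lra. }
  assert (Rpower ((Bt - s1) * R0 / Nm) (- a) < Rpower ((Bt - s2) * R0 / Nm) (- a)).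
  { apply Rpower_neg_decr; try lra.
    apply Rdiv_lt_0_compat; [repeat apply Rmult_lt_0_compat|]; lra.
    unfold Rdiv. apply Rmult_lt_compat_r. apply Rinv_0_lt_compat; lra.
    apply Rmult_lt_compat_r; lra. }
  nra.
Qed.

Definition kk a Nm Nf lamS := Nf * eps a lamS / Nm.
Definition sstar a Nm Nf lamS Bt := kk a Nm Nf lamS * Bt / (1 + kk a Nm Nf lamS).

Lemma kk_pos a Nm Nf lamS : 0 < Nm -> 0 < Nf -> 0 < kk a Nm Nf lamS.
Proof. intros. unfold kk, eps. apply Rdiv_lt_0_compat; try lra. apply Rmult_lt_0_compat; auto; apply Rpower_pos'. Qed.

Lemma phi_star a Nm Nf R0 lamS Bt :
  0 < a < 1 -> 0 < Nm -> 0 < Nf -> 0 < R0 -> 1 < lamS -> 0 < Bt ->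
  phi a Nm Nf R0 lamS Bt (sstar a Nm Nf lamS Bt) = 0.
Proof.
  intros. unfold phi, sstar.
  assert (Hk := kk_pos a Nm Nf lamS H0 H1).
  set (k := kk a Nm Nf lamS) in *.
  set (rm := (Bt - k * Bt / (1 + k)) * R0 / Nm).
  assert (Hrm : 0 < rm). { unfold rm. apply Rdiv_lt_0_compat; try lra. apply Rmult_lt_0_compat; try lra.
     replace (Bt - k * Bt / (1 + k)) with (Bt / (1+k)) by (field; lra). apply Rdiv_lt_0_compat; lra. }
  assert (He : 0 < eps a lamS) by (unfold eps; apply Rpower_pos').
  replace (lamS * (k * Bt / (1 + k)) * R0 / Nf) with (lamS * eps a lamS * rm).
  2:{ unfold rm, k, kk. field. repeat split; try lra. unfold kk in Hk. intro E. assert (0 < Nf * eps a lamS) by (apply Rmult_lt_0_compat; lra). lra. }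
  fold rm.
  assert (0 < lamS * eps a lamS) by (apply Rmult_lt_0_compat; lra).
  rewrite <- Rpower_mult_distr by lra.
  rewrite <- Rpower_mult_distr by lra.
  unfold eps. rewrite Rpower_mult.
  assert (E : lamS * (Rpower lamS (- a) * Rpower lamS ((1 / a - 1) * - a)) = 1).
  { rewrite <- Rpower_plus. rewrite <- (Rpower_1 lamS) at 1 by lra. rewrite <- Rpower_plus.
    replace (1 + (- a + (1 / a - 1) * - a)) with 0 by (field; lra). apply Rpower_O; lra. }
  transitivity ((lamS * (Rpower lamS (- a) * Rpower lamS ((1 / a - 1) * - a))) * Rpower rm (-a) - Rpower rm (-a)).
  ring. rewrite E. ring.
Qed.

Lemma sstar_bounds a Nm Nf lamS Bt : 0 < Nm -> 0 < Nf -> 0 < Bt ->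
  0 < sstar a Nm Nf lamS Bt < Bt.
Proof.
  intros. unfold sstar. pose proof (kk_pos a Nm Nf lamS H H0). set (k := kk a Nm Nf lamS) in *.
  split. apply Rdiv_lt_0_compat; nra.
  apply Rmult_lt_reg_r with (1 + k). lra. field_simplify; lra.
Qed.

Lemma sstar_gt a Nm Nf lamS Bt s : 0 < Nm -> 0 < Nf ->
  sstar a Nm Nf lamS Bt < s -> kk a Nm Nf lamS * (Bt - s) < s.
Proof.
  intros. unfold sstar in H1. pose proof (kk_pos a Nm Nf lamS H H0). set (k := kk a Nm Nf lamS) in *.
  assert (k * Bt < s * (1 + k)).
  { apply Rmult_lt_compat_r with (r := 1 + k) in H1; [|lra]. field_simplify in H1; lra. }
  nra.
Qed.

Lemma sstar_eq a Nm Nf lamS Bt : 0 < Nm -> 0 < Nf ->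
  sstar a Nm Nf lamS Bt = kk a Nm Nf lamS * (Bt - sstar a Nm Nf lamS Bt).
Proof.
  intros. unfold sstar. pose proof (kk_pos a Nm Nf lamS H H0). set (k := kk a Nm Nf lamS) in *.
  field; lra.
Qed.

Lemma phi_pos a Nm Nf R0 lamS Bt s :
  0 < a < 1 -> 0 < Nm -> 0 < Nf -> 0 < R0 -> 1 < lamS -> 0 < Bt ->
  0 < s -> s < sstar a Nm Nf lamS Bt -> 0 < phi a Nm Nf R0 lamS Bt s.
Proof.
  intros. rewrite <- (phi_star a Nm Nf R0 lamS Bt) by auto.
  apply phi_decr; auto. apply sstar_bounds; auto.
Qed.

Lemma phi_neg a Nm Nf R0 lamS Bt s :
  0 < a < 1 -> 0 < Nm -> 0 < Nf -> 0 < R0 -> 1 < lamS -> 0 < Bt ->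
  sstar a Nm Nf lamS Bt < s -> s < Bt -> phi a Nm Nf R0 lamS Bt s < 0.
Proof.
  intros. rewrite <- (phi_star a Nm Nf R0 lamS Bt) by auto.
  apply phi_decr; auto. apply sstar_bounds; auto.
Qed.

Definition G1 a Nm Nf R0 lamS B1 B2 x1 x2 :=
  let RS0 := RS Nf R0 lamS x1 x2 in
  let RM0 := RM Nm R0 B1 B2 x1 x2 in
  lamS * Rpower RS0 (- a) - Rpower RM0 (- a)
  - a * lamS ^ 2 * x1 * R0 / Nf * Rpower RS0 (- a - 1)
  + a * (B1 - x1) * R0 / Nm * Rpower RM0 (- a - 1).

Lemma S1_deriv a Nm Nf R0 lamS B1 B2 x1 x2 :
  0 < Nm -> 0 < Nf -> 0 < R0 -> 1 < lamS ->
  0 < x1 + x2 -> 0 < B1 - x1 + (B2 - x2) ->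
  derivable_pt_lim (fun y => S1 a Nm Nf R0 lamS B1 B2 y x2) x1 (R0 * G1 a Nm Nf R0 lamS B1 B2 x1 x2).
Proof.
  intros HNm HNf HR0 Hl Hs HM.
  set (g := fun z => (R0*B1 + (-R0)*z) * Rpower ((B1+B2-x2)*R0/Nm + (-R0/Nm)*z) (-a)
           + (0 + (R0*lamS)*z) * Rpower (lamS*x2*R0/Nf + (lamS*R0/Nf)*z) (-a)).
  apply derivable_pt_lim_locally_ext with (f := g) (a := -x2) (b := B1+B2-x2).
  lra.
  { intros z Hz. unfold g, S1, RM, RS.
    rewrite !rpow_pos.
    - f_equal; [ f_equal; [ring | f_equal; field; lra] | f_equal; [ring | f_equal; field; lra]].
    - apply Rdiv_lt_0_compat; [repeat apply Rmult_lt_0_compat|]; lra.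
    - apply Rdiv_lt_0_compat; [repeat apply Rmult_lt_0_compat|]; lra. }
  assert (P1 : 0 < (B1+B2-x2)*R0/Nm + (-R0/Nm)*x1).
  { replace ((B1+B2-x2)*R0/Nm + (-R0/Nm)*x1) with ((B1 - x1 + (B2 - x2))*R0/Nm) by (field; lra).
    apply Rdiv_lt_0_compat; [repeat apply Rmult_lt_0_compat|]; lra. }
  assert (P2 : 0 < lamS*x2*R0/Nf + (lamS*R0/Nf)*x1).
  { replace (lamS*x2*R0/Nf + (lamS*R0/Nf)*x1) with (lamS*(x1+x2)*R0/Nf) by (field; lra).
    apply Rdiv_lt_0_compat; [repeat apply Rmult_lt_0_compat|]; lra. }
  pose proof (derivable_pt_lim_plus _ _ _ _ _ (dlin_pow (R0*B1) (-R0) _ _ (-a) x1 P1)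
               (dlin_pow 0 (R0*lamS) _ _ (-a) x1 P2)) as D.
  replace (R0 * G1 a Nm Nf R0 lamS B1 B2 x1 x2) with
   ((-R0) * Rpower ((B1+B2-x2)*R0/Nm + (-R0/Nm)*x1) (-a)
     + (R0*B1 + (-R0)*x1) * (-a * Rpower ((B1+B2-x2)*R0/Nm + (-R0/Nm)*x1) (-a - 1) * (-R0/Nm))
    + ((R0*lamS) * Rpower (lamS*x2*R0/Nf + (lamS*R0/Nf)*x1) (-a)
     + (0 + (R0*lamS)*x1) * (-a * Rpower (lamS*x2*R0/Nf + (lamS*R0/Nf)*x1) (-a - 1) * (lamS*R0/Nf)))).
  - eapply derivable_pt_lim_ext; [|exact D]. intros; reflexivity.
  - unfold G1, RM, RS.
    replace ((B1+B2-x2)*R0/Nm + (-R0/Nm)*x1) with ((B1 - x1 + (B2 - x2))*R0/Nm) by (field; lra).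
    replace (lamS*x2*R0/Nf + (lamS*R0/Nf)*x1) with (lamS*(x1+x2)*R0/Nf) by (field; lra).
    field. lra.
Qed.

Lemma G1_alg a Nm Nf R0 lamS B1 B2 x1 x2 :
  0 < Nm -> 0 < Nf -> 0 < R0 -> 1 < lamS ->
  0 < x1 + x2 -> 0 < B1 - x1 + (B2 - x2) ->
  G1 a Nm Nf R0 lamS B1 B2 x1 x2 =
  lamS * Rpower (RS Nf R0 lamS x1 x2) (-a) * (1 - a * x1 / (x1 + x2))
  - Rpower (RM Nm R0 B1 B2 x1 x2) (-a) * (1 - a * (B1 - x1) / (B1 - x1 + (B2 - x2))).
Proof.
  intros. unfold G1.
  assert (0 < RS Nf R0 lamS x1 x2) by (unfold RS; apply Rdiv_lt_0_compat; [repeat apply Rmult_lt_0_compat|]; lra).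
  assert (0 < RM Nm R0 B1 B2 x1 x2) by (unfold RM; apply Rdiv_lt_0_compat; [repeat apply Rmult_lt_0_compat|]; lra).
  rewrite !Rpower_m1 by auto. unfold RS, RM. field. lra.
Qed.

Lemma RS_sym Nf R0 lamS x1 x2 : RS Nf R0 lamS x2 x1 = RS Nf R0 lamS x1 x2.
Proof. unfold RS; f_equal; f_equal; f_equal; ring. Qed.
Lemma RM_sym Nm R0 B1 B2 x1 x2 : RM Nm R0 B2 B1 x2 x1 = RM Nm R0 B1 B2 x1 x2.
Proof. unfold RM; f_equal; f_equal; ring. Qed.

Lemma G_sum a Nm Nf R0 lamS B1 B2 x1 x2 :
  0 < Nm -> 0 < Nf -> 0 < R0 -> 1 < lamS ->
  0 < x1 + x2 -> 0 < B1 - x1 + (B2 - x2) ->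
  G1 a Nm Nf R0 lamS B1 B2 x1 x2 + G1 a Nm Nf R0 lamS B2 B1 x2 x1 =
  (2 - a) * phi a Nm Nf R0 lamS (B1 + B2) (x1 + x2).
Proof.
  intros. rewrite !G1_alg by (auto; lra). rewrite (RS_sym Nf R0 lamS x1 x2), (RM_sym Nm R0 B1 B2 x1 x2).
  unfold phi, RS, RM.
  replace (B1 - x1 + (B2 - x2)) with (B1 + B2 - (x1 + x2)) by ring.
  field. lra.
Qed.

Lemma G_mono a Nm Nf R0 lamS B1 B2 x1 x1' x2 :
  0 < a < 1 -> 0 < Nm -> 0 < Nf -> 0 < R0 -> 1 < lamS ->
  0 <= x2 -> x2 <= B2 -> 0 < x1 + x2 -> x1 < x1' -> 0 < B1 - x1' + (B2 - x2) ->
  G1 a Nm Nf R0 lamS B1 B2 x1' x2 < G1 a Nm Nf R0 lamS B1 B2 x1 x2.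
Proof.
  intros Ha HNm HNf HR0 Hl H2a H2b Hs Hx HM.
  rewrite !G1_alg by (auto; lra).
  set (c := Rpower (RS Nf R0 lamS x1 x2) (-a)).
  set (c' := Rpower (RS Nf R0 lamS x1' x2) (-a)).
  set (d := Rpower (RM Nm R0 B1 B2 x1 x2) (-a)).
  set (d' := Rpower (RM Nm R0 B1 B2 x1' x2) (-a)).
  assert (Hc : c' < c).
  { unfold c, c', RS. apply Rpower_neg_decr; try lra.
    apply Rdiv_lt_0_compat; [repeat apply Rmult_lt_0_compat|]; lra.
    unfold Rdiv. apply Rmult_lt_compat_r. apply Rinv_0_lt_compat; lra.
    apply Rmult_lt_compat_r; try lra. apply Rmult_lt_compat_l; lra. }
  assert (Hd : d < d').
  { unfold d, d', RM. apply Rpower_neg_decr; try lra.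
    apply Rdiv_lt_0_compat; [repeat apply Rmult_lt_0_compat|]; lra.
    unfold Rdiv. apply Rmult_lt_compat_r. apply Rinv_0_lt_compat; lra.
    apply Rmult_lt_compat_r; lra. }
  assert (0 < c') by apply Rpower_pos'. assert (0 < d) by apply Rpower_pos'.
  assert (F1 : 1 - a * x1' / (x1' + x2) <= 1 - a * x1 / (x1 + x2)).
  { replace (1 - a * x1' / (x1' + x2)) with (1 - a + a * x2 / (x1' + x2)) by (field; lra).
    replace (1 - a * x1 / (x1 + x2)) with (1 - a + a * x2 / (x1 + x2)) by (field; lra).
    apply Rplus_le_compat_l. unfold Rdiv. rewrite !Rmult_assoc. apply Rmult_le_compat_l. lra.
    apply Rmult_le_compat_l; auto. apply Rinv_le_contravar; lra. }
  assert (F1p : 0 < 1 - a * x1' / (x1' + x2)).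
  { replace (1 - a * x1' / (x1' + x2)) with (1 - a + a * (x2 / (x1' + x2))) by (field; lra).
    assert (0 <= x2 / (x1' + x2)) by (apply Rmult_le_pos; [lra| left; apply Rinv_0_lt_compat; lra]). nra. }
  assert (F2 : 1 - a * (B1 - x1) / (B1 - x1 + (B2 - x2)) <= 1 - a * (B1 - x1') / (B1 - x1' + (B2 - x2))).
  { replace (1 - a * (B1 - x1) / (B1 - x1 + (B2 - x2))) with (1 - a + a * (B2 - x2) / (B1 - x1 + (B2 - x2))) by (field; lra).
    replace (1 - a * (B1 - x1') / (B1 - x1' + (B2 - x2))) with (1 - a + a * (B2 - x2) / (B1 - x1' + (B2 - x2))) by (field; lra).
    apply Rplus_le_compat_l. unfold Rdiv. rewrite !Rmult_assoc. apply Rmult_le_compat_l. lra.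
    apply Rmult_le_compat_l; [lra|]. apply Rinv_le_contravar; lra. }
  assert (F2p : 0 < 1 - a * (B1 - x1) / (B1 - x1 + (B2 - x2))).
  { replace (1 - a * (B1 - x1) / (B1 - x1 + (B2 - x2))) with (1 - a + a * ((B2 - x2) / (B1 - x1 + (B2 - x2)))) by (field; lra).
    assert (0 <= (B2 - x2) / (B1 - x1 + (B2 - x2))) by (apply Rmult_le_pos; [lra| left; apply Rinv_0_lt_compat; lra]). nra. }
  assert (lamS * c' * (1 - a * x1' / (x1' + x2)) < lamS * c * (1 - a * x1 / (x1 + x2))).
  { apply Rlt_le_trans with (lamS * c * (1 - a * x1' / (x1' + x2))).
    apply Rmult_lt_compat_r; auto. apply Rmult_lt_compat_l; lra.
    apply Rmult_le_compat_l; auto. nra. }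
  assert (d * (1 - a * (B1 - x1) / (B1 - x1 + (B2 - x2))) < d' * (1 - a * (B1 - x1') / (B1 - x1' + (B2 - x2)))).
  { apply Rlt_le_trans with (d' * (1 - a * (B1 - x1) / (B1 - x1 + (B2 - x2)))).
    apply Rmult_lt_compat_r; auto. apply Rmult_le_compat_l; lra. }
  lra.
Qed.

Lemma deriv_neg_left f x d lo : derivable_pt_lim f x d -> d < 0 -> lo < x ->
  exists y, lo <= y < x /\ f x < f y.
Proof.
  intros D Hd Hlo. destruct (D (-d/2) ltac:(lra)) as [del Hdel].
  set (h := - Rmin (del/2) (x - lo)).
  assert (Hm1 := Rmin_l (del/2) (x-lo)). assert (Hm2 := Rmin_r (del/2) (x-lo)).
  assert (0 < Rmin (del/2) (x-lo)) by (apply Rmin_glb_lt; [destruct del; simpl; lra | lra]).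
  assert (Hh : h <> 0) by (unfold h; lra).
  assert (Ha : Rabs h < del). { unfold h. rewrite Rabs_Ropp, Rabs_pos_eq by lra. destruct del; simpl in *; lra. }
  specialize (Hdel h Hh Ha).
  exists (x + h). split. unfold h; lra.
  apply Rabs_def2 in Hdel. destruct Hdel as [Hdel _].
  assert (Hq : (f (x + h) - f x) / h < d / 2) by lra.
  assert (hneg : h < 0) by (unfold h; lra).
  apply Rmult_lt_compat_r with (r := -h) in Hq; [|lra].
  replace ((f (x + h) - f x) / h * - h) with (f x - f (x+h)) in Hq by (field; auto).
  nra.
Qed.

Lemma deriv_pos_right f x d hi : derivable_pt_lim f x d -> 0 < d -> x < hi ->
  exists y, x < y <= hi /\ f x < f y.
Proof.
  intros D Hd Hhi. destruct (D (d/2) ltac:(lra)) as [del Hdel].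
  set (h := Rmin (del/2) (hi - x)).
  assert (Hm1 := Rmin_l (del/2) (hi-x)). assert (Hm2 := Rmin_r (del/2) (hi-x)).
  assert (0 < h). { unfold h. apply Rmin_glb_lt. destruct del; simpl; lra. lra. }
  assert (Hh : h <> 0) by lra.
  assert (Ha : Rabs h < del). { rewrite Rabs_pos_eq by lra. unfold h; destruct del; simpl in *; lra. }
  specialize (Hdel h Hh Ha).
  exists (x + h). split. unfold h in *; lra.
  apply Rabs_def2 in Hdel. destruct Hdel as [_ Hdel].
  assert (Hq : d / 2 < (f (x + h) - f x) / h) by lra.
  apply Rmult_lt_compat_r with (r := h) in Hq; [|lra].
  replace ((f (x + h) - f x) / h * h) with (f (x+h) - f x) in Hq by (field; auto).
  nra.
Qed.

Lemma S2_sym a Nm Nf R0 lamS B1 B2 x1 x2 :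
  S2 a Nm Nf R0 lamS B1 B2 x1 x2 = S1 a Nm Nf R0 lamS B2 B1 x2 x1.
Proof. unfold S1, S2. rewrite (RS_sym Nf R0 lamS x1 x2), (RM_sym Nm R0 B1 B2 x1 x2). reflexivity. Qed.

Lemma isNE_sym a Nm Nf R0 lamS B1 B2 l1 l2 x1 x2 :
  isNE a Nm Nf R0 lamS B1 B2 l1 l2 x1 x2 -> isNE a Nm Nf R0 lamS B2 B1 l2 l1 x2 x1.
Proof.
  intros [[F1 F2] [H1 H2]]. split. split; auto. split.
  - intros y Hy. rewrite <- !S2_sym. auto.
  - intros y Hy. specialize (H1 y Hy). rewrite !S2_sym. exact H1.
Qed.

Lemma SW_sum a Nm Nf R0 lamS B1 B2 x1 x2 y1 y2 : x1 + x2 = y1 + y2 ->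
  SW a Nm Nf R0 lamS B1 B2 x1 x2 = SW a Nm Nf R0 lamS B1 B2 y1 y2.
Proof.
  intros E. unfold SW, RM, RS.
  replace (B1 - x1 + (B2 - x2)) with (B1 + B2 - (x1 + x2)) by ring.
  replace (B1 - y1 + (B2 - y2)) with (B1 + B2 - (y1 + y2)) by ring.
  rewrite E. reflexivity.
Qed.

Lemma NE_foc_up a Nm Nf R0 lamS B1 B2 l1 l2 x1 x2 :
  0 < Nm -> 0 < Nf -> 0 < R0 -> 1 < lamS ->
  isNE a Nm Nf R0 lamS B1 B2 l1 l2 x1 x2 ->
  0 < x1 + x2 -> 0 < B1 - x1 + (B2 - x2) -> l1 < x1 -> 0 <= G1 a Nm Nf R0 lamS B1 B2 x1 x2.
Proof.
  intros HNm HNf HR0 Hl [[F1 F2] [H1 H2]] Hs HM Hx.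
  destruct (Rle_dec 0 (G1 a Nm Nf R0 lamS B1 B2 x1 x2)) as [|Hn]; auto. exfalso.
  pose proof (S1_deriv a Nm Nf R0 lamS B1 B2 x1 x2 HNm HNf HR0 Hl Hs HM) as D.
  destruct (deriv_neg_left _ _ _ l1 D) as [y [Hy1 Hy2]]; auto. nra.
  specialize (H1 y ltac:(lra)). lra.
Qed.

Lemma NE_foc_down a Nm Nf R0 lamS B1 B2 l1 l2 x1 x2 :
  0 < Nm -> 0 < Nf -> 0 < R0 -> 1 < lamS ->
  isNE a Nm Nf R0 lamS B1 B2 l1 l2 x1 x2 ->
  0 < x1 + x2 -> 0 < B1 - x1 + (B2 - x2) -> x1 < B1 -> G1 a Nm Nf R0 lamS B1 B2 x1 x2 <= 0.
Proof.
  intros HNm HNf HR0 Hl [[F1 F2] [H1 H2]] Hs HM Hx.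
  destruct (Rle_dec (G1 a Nm Nf R0 lamS B1 B2 x1 x2) 0) as [|Hn]; auto. exfalso.
  pose proof (S1_deriv a Nm Nf R0 lamS B1 B2 x1 x2 HNm HNf HR0 Hl Hs HM) as D.
  destruct (deriv_pos_right _ _ _ B1 D) as [y [Hy1 Hy2]]; auto. nra.
  specialize (H1 y ltac:(lra)). lra.
Qed.

Lemma NE_not_full a Nm Nf R0 lamS B1 B2 l1 l2 x1 x2 :
  0 < a < 1 -> 0 < Nm -> 0 < Nf -> 0 < R0 -> 1 < lamS -> 0 < B2 -> 0 <= l1 -> l1 < B1 ->
  isNE a Nm Nf R0 lamS B1 B2 l1 l2 x1 x2 -> x1 = B1 -> x2 = B2 -> False.
Proof.
  intros Ha HNm HNf HR0 Hl HB2 Hl1 Hl1b [[F1 F2] [H1 H2]] E1 E2. subst x1 x2.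
  set (Pc := Rpower (RS Nf R0 lamS B1 B2) (-a)).
  destruct (small_P a (lamS * Pc) ltac:(lra)) as [z0 [Hz0 Hz]].
  set (h := Rmin (B1 - l1) (z0 * Nm / R0)).
  assert (Hm1 := Rmin_l (B1 - l1) (z0 * Nm / R0)). assert (Hm2 := Rmin_r (B1 - l1) (z0 * Nm / R0)).
  assert (0 < z0 * Nm / R0) by (apply Rdiv_lt_0_compat; nra).
  assert (Hh : 0 < h) by (unfold h; apply Rmin_glb_lt; lra).
  fold h in Hm1, Hm2.
  specialize (H1 (B1 - h) ltac:(lra)).
  unfold S1 in H1.
  replace (B1 - B1) with 0 in H1 by ring.
  replace (B1 - (B1 - h)) with h in H1 by ring.
  assert (ERM : RM Nm R0 B1 B2 (B1 - h) B2 = h * R0 / Nm) by (unfold RM; field; lra).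
  rewrite ERM in H1.
  assert (Hrm : 0 < h * R0 / Nm) by (apply Rdiv_lt_0_compat; nra).
  assert (Hrs0 : 0 < RS Nf R0 lamS B1 B2) by (unfold RS; apply Rdiv_lt_0_compat; [repeat apply Rmult_lt_0_compat|]; lra).
  assert (Hrs : 0 < RS Nf R0 lamS (B1 - h) B2) by (unfold RS; apply Rdiv_lt_0_compat; [repeat apply Rmult_lt_0_compat|]; lra).
  rewrite (rpow_pos (RS Nf R0 lamS B1 B2)), (rpow_pos (RS Nf R0 lamS (B1 - h) B2)), rpow_pos in H1 by auto.
  fold Pc in H1.
  assert (Hle : Pc <= Rpower (RS Nf R0 lamS (B1 - h) B2) (- a)).
  { unfold Pc. apply Rpower_neg_decr_le; try lra. unfold RS.
    unfold Rdiv. apply Rmult_le_compat_r. left; apply Rinv_0_lt_compat; lra.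
    apply Rmult_le_compat_r; try lra. apply Rmult_le_compat_l; lra. }
  assert (Hk : lamS * Pc < Rpower (h * R0 / Nm) (- a)).
  { apply Hz. split; auto. unfold h in *. apply Rle_trans with (z0 * Nm / R0 * R0 / Nm).
    unfold Rdiv. apply Rmult_le_compat_r. left; apply Rinv_0_lt_compat; lra. apply Rmult_le_compat_r; lra.
    right; field; lra. }
  assert (0 < Pc) by apply Rpower_pos'.
  assert (R0 * h * (lamS * Pc) < R0 * h * Rpower (h * R0 / Nm) (- a)) by (apply Rmult_lt_compat_l; nra).
  assert (R0 * lamS * (B1 - h) * Pc <= R0 * lamS * (B1 - h) * Rpower (RS Nf R0 lamS (B1 - h) B2) (- a)).
  { apply Rmult_le_compat_l; auto. apply Rmult_le_pos; [apply Rmult_le_pos|]; lra. }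
  nra.
Qed.

Lemma NE_not_zero a Nm Nf R0 lamS B1 B2 l1 l2 x1 x2 :
  0 < a < 1 -> 0 < Nm -> 0 < Nf -> 0 < R0 -> 1 < lamS -> 0 < B1 -> 0 < B2 ->
  isNE a Nm Nf R0 lamS B1 B2 l1 l2 x1 x2 -> x1 = 0 -> x2 = 0 -> False.
Proof.
  intros Ha HNm HNf HR0 Hl HB1 HB2 [[F1 F2] [H1 H2]] E1 E2. subst x1 x2.
  set (Pm := Rpower (RM Nm R0 B1 B2 0 0) (-a)).
  destruct (small_P a Pm ltac:(lra)) as [z0 [Hz0 Hz]].
  set (h := Rmin B1 (z0 * Nf / (lamS * R0))).
  assert (Hm1 := Rmin_l B1 (z0 * Nf / (lamS * R0))). assert (Hm2 := Rmin_r B1 (z0 * Nf / (lamS * R0))).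
  assert (0 < z0 * Nf / (lamS * R0)) by (apply Rdiv_lt_0_compat; nra).
  assert (Hh : 0 < h) by (unfold h; apply Rmin_glb_lt; lra).
  fold h in Hm1, Hm2.
  specialize (H1 h ltac:(lra)).
  unfold S1 in H1.
  assert (ERS : RS Nf R0 lamS h 0 = lamS * h * R0 / Nf) by (unfold RS; f_equal; f_equal; ring).
  rewrite ERS in H1.
  assert (Hrs : 0 < lamS * h * R0 / Nf) by (apply Rdiv_lt_0_compat; [repeat apply Rmult_lt_0_compat|]; lra).
  assert (Hrm0 : 0 < RM Nm R0 B1 B2 0 0) by (unfold RM; apply Rdiv_lt_0_compat; [repeat apply Rmult_lt_0_compat|]; lra).
  assert (Hrm : 0 < RM Nm R0 B1 B2 h 0) by (unfold RM; apply Rdiv_lt_0_compat; [repeat apply Rmult_lt_0_compat|]; lra).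
  rewrite (rpow_pos (RM Nm R0 B1 B2 0 0)), (rpow_pos (RM Nm R0 B1 B2 h 0)), (rpow_pos (lamS * h * R0 / Nf)) in H1 by auto.
  fold Pm in H1.
  assert (Hle : Pm <= Rpower (RM Nm R0 B1 B2 h 0) (- a)).
  { unfold Pm. apply Rpower_neg_decr_le; try lra. unfold RM.
    unfold Rdiv. apply Rmult_le_compat_r. left; apply Rinv_0_lt_compat; lra.
    apply Rmult_le_compat_r; lra. }
  assert (Hk : Pm < Rpower (lamS * h * R0 / Nf) (- a)).
  { apply Hz. split; auto. apply Rle_trans with (lamS * (z0 * Nf / (lamS * R0)) * R0 / Nf).
    unfold Rdiv. apply Rmult_le_compat_r. left; apply Rinv_0_lt_compat; lra. apply Rmult_le_compat_r; try lra.
    apply Rmult_le_compat_l; lra.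
    right; field; lra. }
  assert (0 < Pm) by apply Rpower_pos'.
  assert (R0 * h * Pm < R0 * lamS * h * Rpower (lamS * h * R0 / Nf) (- a)).
  { apply Rlt_le_trans with (R0 * h * Rpower (lamS * h * R0 / Nf) (- a)).
    apply Rmult_lt_compat_l; nra.
    assert (0 < Rpower (lamS * h * R0 / Nf) (- a)) by apply Rpower_pos'.
    assert (0 < R0 * h * Rpower (lamS * h * R0 / Nf) (- a)) by (repeat apply Rmult_lt_0_compat; lra).
    replace (R0 * lamS * h * Rpower (lamS * h * R0 / Nf) (- a)) with (lamS * (R0 * h * Rpower (lamS * h * R0 / Nf) (- a))) by ring.
    nra. }
  assert (R0 * (B1 - h) * Pm <= R0 * (B1 - h) * Rpower (RM Nm R0 B1 B2 h 0) (- a)).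
  { apply Rmult_le_compat_l; auto. apply Rmult_le_pos; lra. }
  nra.
Qed.

Lemma phi_prof a Nm Nf R0 lamS B1 B2 x1 x2 :
  phi a Nm Nf R0 lamS (B1 + B2) (x1 + x2) =
  lamS * Rpower (RS Nf R0 lamS x1 x2) (-a) - Rpower (RM Nm R0 B1 B2 x1 x2) (-a).
Proof. unfold phi, RS, RM. replace (B1 - x1 + (B2 - x2)) with (B1 + B2 - (x1 + x2)) by ring. reflexivity. Qed.

Lemma G2_alg a Nm Nf R0 lamS B1 B2 x1 x2 :
  0 < Nm -> 0 < Nf -> 0 < R0 -> 1 < lamS ->
  0 < x1 + x2 -> 0 < B1 - x1 + (B2 - x2) ->
  G1 a Nm Nf R0 lamS B2 B1 x2 x1 =
  lamS * Rpower (RS Nf R0 lamS x1 x2) (-a) * (1 - a * x2 / (x1 + x2))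
  - Rpower (RM Nm R0 B1 B2 x1 x2) (-a) * (1 - a * (B2 - x2) / (B1 - x1 + (B2 - x2))).
Proof.
  intros. rewrite G1_alg by (auto; lra). rewrite (RS_sym Nf R0 lamS x1 x2), (RM_sym Nm R0 B1 B2 x1 x2).
  replace (x2 + x1) with (x1 + x2) by ring. replace (B2 - x2 + (B1 - x1)) with (B1 - x1 + (B2 - x2)) by ring.
  reflexivity.
Qed.

Lemma ge_star_aux a Nm Nf R0 lamS B1 B2 l1 l2 x1 x2 :
  0 < a < 1 -> 0 < Nm -> 0 < Nf -> 0 < R0 -> 1 < lamS ->
  0 <= l1 -> 0 <= l2 -> isNE a Nm Nf R0 lamS B1 B2 l1 l2 x1 x2 ->
  0 < x1 + x2 -> x1 + x2 < B1 + B2 -> x1 + x2 < sstar a Nm Nf lamS (B1 + B2) ->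
  0 < G1 a Nm Nf R0 lamS B1 B2 x1 x2 -> False.
Proof.
  intros Ha HNm HNf HR0 Hl Hl1 Hl2 HNE Hs HsB Hst HG.
  pose proof HNE as [[F1 F2] _].
  assert (HM : 0 < B1 - x1 + (B2 - x2)) by lra.
  assert (E1 : x1 = B1).
  { destruct (Rlt_dec x1 B1) as [Hlt|]; [|lra].
    pose proof (NE_foc_down _ _ _ _ _ _ _ _ _ _ _ HNm HNf HR0 Hl HNE Hs HM Hlt). lra. }
  assert (Hph := phi_pos a Nm Nf R0 lamS (B1+B2) (x1+x2) Ha HNm HNf HR0 Hl ltac:(lra) Hs Hst).
  rewrite phi_prof in Hph.
  set (c := Rpower (RS Nf R0 lamS x1 x2) (-a)) in *.
  set (am := Rpower (RM Nm R0 B1 B2 x1 x2) (-a)) in *.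
  assert (HG2 : 0 < G1 a Nm Nf R0 lamS B2 B1 x2 x1).
  { rewrite G2_alg by auto. fold c am.
    replace (1 - a * (B2 - x2) / (B1 - x1 + (B2 - x2))) with (1 - a) by (rewrite E1; field; lra).
    assert (x2 / (x1 + x2) <= 1). { apply Rmult_le_reg_r with (x1 + x2); auto. unfold Rdiv; rewrite Rmult_assoc, Rinv_l, Rmult_1_r, Rmult_1_l; lra. }
    replace (1 - a * x2 / (x1 + x2)) with (1 - a * (x2 / (x1 + x2))) by (field; lra).
    assert (0 < am) by apply Rpower_pos'.
    assert (1 - a <= 1 - a * (x2 / (x1 + x2))) by nra.
    nra. }
  pose proof (isNE_sym _ _ _ _ _ _ _ _ _ _ _ HNE) as HNE'.
  assert (E2 : x2 = B2).
  { destruct (Rlt_dec x2 B2) as [Hlt|]; [|lra].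
    pose proof (NE_foc_down _ _ _ _ _ _ _ _ _ _ _ HNm HNf HR0 Hl HNE' ltac:(lra) ltac:(lra) Hlt). lra. }
  lra.
Qed.

Lemma le_star_aux a Nm Nf R0 lamS B1 B2 l1 l2 x1 x2 :
  0 < a < 1 -> 0 < Nm -> 0 < Nf -> 0 < R0 -> 1 < lamS ->
  0 <= l1 -> 0 <= l2 -> isNE a Nm Nf R0 lamS B1 B2 l1 l2 x1 x2 ->
  l1 + l2 <= sstar a Nm Nf lamS (B1 + B2) -> l1 <= kk a Nm Nf lamS * (B1 - l1) ->
  sstar a Nm Nf lamS (B1 + B2) < x1 + x2 -> x1 + x2 < B1 + B2 ->
  G1 a Nm Nf R0 lamS B1 B2 x1 x2 < 0 -> False.
Proof.
  intros Ha HNm HNf HR0 Hl Hl1 Hl2 HNE Hll Hk Hst HsB HG.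
  pose proof HNE as [[F1 F2] _].
  assert (HBt : 0 < B1 + B2) by lra.
  assert (Hsb := sstar_bounds a Nm Nf lamS (B1+B2) HNm HNf HBt).
  assert (Hs : 0 < x1 + x2) by lra.
  assert (HM : 0 < B1 - x1 + (B2 - x2)) by lra.
  assert (E1 : x1 = l1).
  { destruct (Rlt_dec l1 x1) as [Hlt|]; [|lra].
    pose proof (NE_foc_up _ _ _ _ _ _ _ _ _ _ _ HNm HNf HR0 Hl HNE Hs HM Hlt). lra. }
  pose proof (isNE_sym _ _ _ _ _ _ _ _ _ _ _ HNE) as HNE'.
  assert (HG2 : 0 <= G1 a Nm Nf R0 lamS B2 B1 x2 x1).
  { destruct (Rle_dec 0 (G1 a Nm Nf R0 lamS B2 B1 x2 x1)) as [|Hn]; auto.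
    assert (E2 : x2 = l2).
    { destruct (Rlt_dec l2 x2) as [Hlt|]; [|lra].
      pose proof (NE_foc_up _ _ _ _ _ _ _ _ _ _ _ HNm HNf HR0 Hl HNE' ltac:(lra) ltac:(lra) Hlt). lra. }
    lra. }
  assert (Hph := phi_neg a Nm Nf R0 lamS (B1+B2) (x1+x2) Ha HNm HNf HR0 Hl HBt Hst HsB).
  rewrite phi_prof in Hph.
  rewrite G2_alg in HG2 by auto.
  set (c := Rpower (RS Nf R0 lamS x1 x2) (-a)) in *.
  set (am := Rpower (RM Nm R0 B1 B2 x1 x2) (-a)) in *.
  set (s := x1 + x2) in *. set (M := B1 - x1 + (B2 - x2)) in *.
  assert (0 < am) by apply Rpower_pos'.
  assert (EX : 1 - a * x2 / s = 1 - a + a * (x1 / s)) by (unfold s in *; field; lra).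
  assert (EY : 1 - a * (B2 - x2) / M = 1 - a + a * ((B1 - x1) / M)) by (unfold M in *; field; lra).
  rewrite EX, EY in HG2.
  assert (0 <= x1 / s) by (apply Rmult_le_pos; [lra| left; apply Rinv_0_lt_compat; lra]).
  assert (Xp : 0 < 1 - a + a * (x1 / s)) by nra.
  assert (am * (1 - a + a * ((B1 - x1) / M)) < am * (1 - a + a * (x1 / s))) by nra.
  assert (Q : (B1 - x1) / M < x1 / s).
  { apply Rmult_lt_reg_l with am; auto. nra. }
  assert (Q2 : (B1 - x1) * s < x1 * M).
  { apply Rmult_lt_compat_r with (r := s * M) in Q; [|nra].
    replace ((B1 - x1) / M * (s * M)) with ((B1 - x1) * s) in Q by (field; lra).
    replace (x1 / s * (s * M)) with (x1 * M) in Q by (field; lra). exact Q. }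
  pose proof (sstar_gt a Nm Nf lamS (B1+B2) s HNm HNf Hst) as Hg.
  replace (B1 + B2 - s) with M in Hg by (unfold M, s; ring).
  subst x1.
  assert (HB1l : 0 <= B1 - l1) by lra.
  assert (l1 * M <= kk a Nm Nf lamS * (B1 - l1) * M) by (apply Rmult_le_compat_r; lra).
  assert ((B1 - l1) * (kk a Nm Nf lamS * M) <= (B1 - l1) * s) by (apply Rmult_le_compat_l; lra).
  nra.
Qed.

Lemma prop_at_star a Nm Nf R0 lamS B1 B2 l1 l2 x1 x2 :
  0 < a < 1 -> 0 < Nm -> 0 < Nf -> 0 < R0 -> 1 < lamS -> 0 < B1 + B2 ->
  0 <= l1 -> 0 <= l2 -> isNE a Nm Nf R0 lamS B1 B2 l1 l2 x1 x2 ->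
  x1 + x2 = sstar a Nm Nf lamS (B1 + B2) ->
  x1 * (B1 - x1 + (B2 - x2)) <= (B1 - x1) * (x1 + x2).
Proof.
  intros Ha HNm HNf HR0 Hl HBt Hl1 Hl2 HNE Hst.
  pose proof HNE as [[F1 F2] _].
  assert (Hsb := sstar_bounds a Nm Nf lamS (B1+B2) HNm HNf HBt).
  assert (Hs : 0 < x1 + x2) by lra.
  assert (HM : 0 < B1 - x1 + (B2 - x2)) by lra.
  destruct (Rle_dec (x1 * (B1 - x1 + (B2 - x2))) ((B1 - x1) * (x1 + x2))) as [|Hn]; auto. exfalso.
  assert (Hph := phi_star a Nm Nf R0 lamS (B1+B2) Ha HNm HNf HR0 Hl HBt).
  rewrite <- Hst, phi_prof in Hph.
  assert (Hsum := G_sum a Nm Nf R0 lamS B1 B2 x1 x2 HNm HNf HR0 Hl Hs HM).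
  rewrite phi_prof, Hph in Hsum.
  pose proof (G1_alg a Nm Nf R0 lamS B1 B2 x1 x2 HNm HNf HR0 Hl Hs HM) as GA1.
  pose proof (G2_alg a Nm Nf R0 lamS B1 B2 x1 x2 HNm HNf HR0 Hl Hs HM) as GA2.
  set (c := Rpower (RS Nf R0 lamS x1 x2) (-a)) in *.
  set (am := Rpower (RM Nm R0 B1 B2 x1 x2) (-a)) in *.
  set (s := x1 + x2) in *. set (M := B1 - x1 + (B2 - x2)) in *.
  assert (0 < am) by apply Rpower_pos'.
  assert (Ec : lamS * c = am) by lra.
  assert (EG1 : G1 a Nm Nf R0 lamS B1 B2 x1 x2 = am * a * ((B1 - x1) * s - x1 * M) / (s * M)).
  { rewrite GA1, Ec. unfold s, M in *. field. split; lra. }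
  assert (G1 a Nm Nf R0 lamS B1 B2 x1 x2 < 0).
  { rewrite EG1. unfold Rdiv. apply Rmult_lt_0_compat_neg_pos || idtac.
    assert (0 < / (s * M)) by (apply Rinv_0_lt_compat; nra).
    assert (am * a * ((B1 - x1) * s - x1 * M) < 0).
    { assert (0 < am * a) by nra. nra. }
    nra. }
  pose proof (isNE_sym _ _ _ _ _ _ _ _ _ _ _ HNE) as HNE'.
  assert (E2 : x2 = B2).
  { destruct (Rlt_dec x2 B2) as [Hlt|]; [|lra].
    pose proof (NE_foc_down _ _ _ _ _ _ _ _ _ _ _ HNm HNf HR0 Hl HNE' ltac:(unfold s in Hs; lra) ltac:(unfold M in HM; lra) Hlt). lra. }
  assert (G1 a Nm Nf R0 lamS B2 B1 x2 x1 <= 0).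
  { rewrite GA2, Ec. rewrite E2. replace (B2 - B2) with 0 by ring.
    assert (0 <= x2 / s) by (apply Rmult_le_pos; [lra| left; apply Rinv_0_lt_compat; lra]).
    replace (a * 0 / M) with 0 by (field; lra).
    replace (a * B2 / s) with (a * (B2 / s)) by (field; lra).
    rewrite <- E2. assert (0 <= am * a * (x2 / s)) by (apply Rmult_le_pos; [apply Rmult_le_pos|]; lra). lra. }
  lra.
Qed.

Lemma part1_aux a Nm Nf R0 lamS B1 B2 l1 l2 x1 x2 :
  0 < a < 1 -> 0 < Nm -> 0 < Nf -> 0 < R0 -> 1 < lamS ->
  0 <= l1 -> 0 <= l2 -> isNE a Nm Nf R0 lamS B1 B2 l1 l2 x1 x2 ->
  x1 = l1 -> l2 < x2 -> 0 < l1 + l2 -> x1 + x2 < B1 + B2 ->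
  G1 a Nm Nf R0 lamS B2 B1 l2 l1 <= 0 -> False.
Proof.
  intros Ha HNm HNf HR0 Hl Hl1 Hl2 HNE E1 Hx2 Hll Hs HG.
  pose proof HNE as [[F1 F2] _].
  pose proof (isNE_sym _ _ _ _ _ _ _ _ _ _ _ HNE) as HNE'.
  pose proof (NE_foc_up _ _ _ _ _ _ _ _ _ _ _ HNm HNf HR0 Hl HNE' ltac:(lra) ltac:(lra) Hx2) as H.
  assert (G1 a Nm Nf R0 lamS B2 B1 x2 l1 < G1 a Nm Nf R0 lamS B2 B1 l2 l1).
  { apply G_mono; auto; lra. }
  subst x1. lra.
Qed.

Lemma dS_eq1 a Nm Nf R0 lamS B1o B2o B1n B2n :
  G1 a Nm Nf R0 lamS (B1o + B1n) (B2o + B2n) B1n B2n = dSi a Nm Nf R0 lamS B1o B2o B1n B2n B1o B1n.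
Proof.
  unfold G1, dSi, RS, RM.
  replace (B1o + B1n - B1n + (B2o + B2n - B2n)) with (B1o + B2o) by ring.
  replace (B1o + B1n - B1n) with B1o by ring. reflexivity.
Qed.

Lemma dS_eq2 a Nm Nf R0 lamS B1o B2o B1n B2n :
  G1 a Nm Nf R0 lamS (B2o + B2n) (B1o + B1n) B2n B1n = dSi a Nm Nf R0 lamS B1o B2o B1n B2n B2o B2n.
Proof.
  unfold G1, dSi, RS, RM.
  replace (B2o + B2n - B2n + (B1o + B1n - B1n)) with (B1o + B2o) by ring.
  replace (B2n + B1n) with (B1n + B2n) by ring.
  replace (B2o + B2n - B2n) with B2o by ring. reflexivity.
Qed.

Lemma Wmax a Nm Nf R0 lamS B1 B2 y1 y2 p1 p2 :
  0 < a < 1 -> 0 < Nm -> 0 < Nf -> 0 < R0 -> 1 < lamS -> 0 < B1 + B2 ->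
  0 <= y1 + y2 <= B1 + B2 -> p1 + p2 = sstar a Nm Nf lamS (B1 + B2) ->
  SW a Nm Nf R0 lamS B1 B2 y1 y2 <= SW a Nm Nf R0 lamS B1 B2 p1 p2 /\
  (y1 + y2 <> p1 + p2 -> SW a Nm Nf R0 lamS B1 B2 y1 y2 < SW a Nm Nf R0 lamS B1 B2 p1 p2).
Proof.
  intros Ha HNm HNf HR0 Hl HBt Hy Hp.
  assert (Hsb := sstar_bounds a Nm Nf lamS (B1+B2) HNm HNf HBt).
  assert (St : y1 + y2 <> p1 + p2 -> SW a Nm Nf R0 lamS B1 B2 y1 y2 < SW a Nm Nf R0 lamS B1 B2 p1 p2).
  { intros Hne. pose proof (SW_tangent a Nm Nf R0 lamS B1 B2 p1 p2 y1 y2 Ha HNm HNf HR0 Hl ltac:(lra) Hy Hne) as H.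
    rewrite Hp, phi_star in H by auto. lra. }
  split; auto.
  destruct (Req_dec (y1 + y2) (p1 + p2)) as [E|E].
  - right. apply SW_sum; auto.
  - left; auto.
Qed.

Lemma Wdec a Nm Nf R0 lamS B1 B2 x1 x2 y1 y2 :
  0 < a < 1 -> 0 < Nm -> 0 < Nf -> 0 < R0 -> 1 < lamS -> 0 < B1 + B2 ->
  sstar a Nm Nf lamS (B1 + B2) <= x1 + x2 -> x1 + x2 < y1 + y2 -> y1 + y2 <= B1 + B2 ->
  SW a Nm Nf R0 lamS B1 B2 y1 y2 < SW a Nm Nf R0 lamS B1 B2 x1 x2.
Proof.
  intros Ha HNm HNf HR0 Hl HBt H1 H2 H3.
  assert (Hsb := sstar_bounds a Nm Nf lamS (B1+B2) HNm HNf HBt).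
  pose proof (SW_tangent a Nm Nf R0 lamS B1 B2 x1 x2 y1 y2 Ha HNm HNf HR0 Hl ltac:(lra) ltac:(lra) ltac:(lra)) as H.
  assert (phi a Nm Nf R0 lamS (B1 + B2) (x1 + x2) <= 0).
  { destruct H1 as [H1|H1].
    - left. apply phi_neg; auto; lra.
    - rewrite <- H1, phi_star by auto. lra. }
  assert (0 < R0 * (y1 + y2 - (x1 + x2))) by (apply Rmult_lt_0_compat; lra).
  nra.
Qed.

Theorem theorem6
  (alpha Nm Nf R0 lamS B1o B2o B B1n B2n : R)
  (Halpha : 0 < alpha < 1) (HNm : 0 < Nm) (HNf : 0 < Nf) (HR0 : 0 < R0)
  (HlamS : 1 < lamS) (HB1o : 0 < B1o) (HB2o : 0 < B2o)
  (HB : 0 <= B) (HB1n : 0 <= B1n) (HB2n : 0 <= B2n) (Hsplit : B1n + B2n = B)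
  (SWwo SWw xNE1 xNE2 : R)
  (Hwo : is_max_SW alpha Nm Nf R0 lamS (B1o + B1n) (B2o + B2n) 0 0 SWwo)
  (Hw : is_max_SW alpha Nm Nf R0 lamS (B1o + B1n) (B2o + B2n) B1n B2n SWw)
  (HNE : isNE alpha Nm Nf R0 lamS (B1o + B1n) (B2o + B2n) B1n B2n xNE1 xNE2) :
  let SWNE := SW alpha Nm Nf R0 lamS (B1o + B1n) (B2o + B2n) xNE1 xNE2 in
  let T := (B1o + B2o) * Nf * eps alpha lamS / Nm in
  (T < B ->
     SWNE <= SWw /\ SWw < SWwo /\
     (SWNE = SWw <->
        (dSi alpha Nm Nf R0 lamS B1o B2o B1n B2n B1o B1n <= 0 /\
         dSi alpha Nm Nf R0 lamS B1o B2o B1n B2n B2o B2n <= 0))) /\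
  (B <= T ->
     SWNE <= SWw /\ SWw = SWwo /\
     (SWNE = SWwo <->
        (B - B2o * Nf * eps alpha lamS / Nm <= B1n /\
         B1n <= B1o * Nf * eps alpha lamS / Nm /\ B2n = B - B1n))).
Proof.
  cbv zeta.
  set (a := alpha) in *.
  rewrite <- (dS_eq1 a Nm Nf R0 lamS B1o B2o B1n B2n), <- (dS_eq2 a Nm Nf R0 lamS B1o B2o B1n B2n).
  set (B1 := B1o + B1n) in *. set (B2 := B2o + B2n) in *.
  assert (HBt : 0 < B1 + B2) by (unfold B1, B2; lra).
  pose proof (kk_pos a Nm Nf lamS HNm HNf) as Hk.
  set (k := kk a Nm Nf lamS) in *.
  assert (ET : (B1o + B2o) * Nf * eps a lamS / Nm = k * (B1o + B2o)) by (unfold k, kk; field; lra).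
  assert (E1 : B1o * Nf * eps a lamS / Nm = k * B1o) by (unfold k, kk; field; lra).
  assert (E2 : B2o * Nf * eps a lamS / Nm = k * B2o) by (unfold k, kk; field; lra).
  rewrite ET, E1, E2.
  pose proof (sstar_bounds a Nm Nf lamS (B1+B2) HNm HNf HBt) as Hsb.
  pose proof (sstar_eq a Nm Nf lamS (B1+B2) HNm HNf) as Hse.
  set (ss := sstar a Nm Nf lamS (B1 + B2)) in *.
  fold k in Hse.
  assert (HBt' : B1 + B2 = B1o + B2o + B) by (unfold B1, B2; lra).
  assert (HT : B <= k * (B1o + B2o) <-> B <= ss).
  { split; intro H.
    - destruct (Rle_dec B ss) as [|Hn]; auto. exfalso.
      assert (k * (B1 + B2 - B) < k * (B1 + B2 - ss)) by (apply Rmult_lt_compat_l; lra).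
      rewrite HBt' in *. nra.
    - assert (k * (B1 + B2 - ss) <= k * (B1 + B2 - B)) by (apply Rmult_le_compat_l; lra).
      rewrite HBt' in *. nra. }
  destruct Hwo as [[z1 [z2 [Fz Ez]]] Hwo2].
  destruct Hw as [[w1 [w2 [Fw Ew]]] Hw2].
  pose proof HNE as [FN _].
  pose proof (isNE_sym _ _ _ _ _ _ _ _ _ _ _ HNE) as HNE'.
  assert (HB1 : 0 < B1) by (unfold B1; lra). assert (HB2 : 0 < B2) by (unfold B2; lra).
  set (x1 := xNE1) in *. set (x2 := xNE2) in *.
  assert (HNEw : SW a Nm Nf R0 lamS B1 B2 x1 x2 <= SWw) by (apply Hw2; auto).
  assert (Hss' : sstar a Nm Nf lamS (B2 + B1) = ss) by (unfold ss; f_equal; ring).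
  destruct FN as [FN1 FN2].
  assert (HsBt : x1 + x2 < B1 + B2).
  { destruct (Rlt_dec (x1 + x2) (B1 + B2)) as [|Hn]; auto. exfalso.
    assert (Hl1B : B1n < B1) by (unfold B1; lra).
    apply (NE_not_full _ _ _ _ _ _ _ _ _ _ _ Halpha HNm HNf HR0 HlamS HB2 HB1n Hl1B HNE); lra. }
  set (th := ss / (B1 + B2)).
  assert (Hth : 0 < th < 1).
  { unfold th. split. apply Rdiv_lt_0_compat; lra.
    apply Rmult_lt_reg_r with (B1 + B2); auto. unfold Rdiv; rewrite Rmult_assoc, Rinv_l, Rmult_1_r, Rmult_1_l; lra. }
  assert (Hp : th * B1 + th * B2 = ss) by (unfold th; field; lra).
  assert (HpF : SW a Nm Nf R0 lamS B1 B2 (th * B1) (th * B2) <= SWwo).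
  { apply Hwo2. split; split; nra. }
  assert (HzF : SWwo <= SW a Nm Nf R0 lamS B1 B2 (th * B1) (th * B2)).
  { rewrite <- Ez. apply (Wmax a Nm Nf R0 lamS B1 B2 z1 z2 _ _ Halpha HNm HNf HR0 HlamS HBt); auto.
    destruct Fz as [[? ?] [? ?]]; lra. }
  split.
  -
    intros HTB.
    assert (HsB : ss < B) by (destruct (Rle_dec B ss) as [H|H]; [apply HT in H; lra| lra]).
    split; [auto|]. split.
    + rewrite <- Ew.
      destruct Fw as [[? ?] [? ?]].
      assert (SW a Nm Nf R0 lamS B1 B2 w1 w2 < SW a Nm Nf R0 lamS B1 B2 (th * B1) (th * B2)).
      { apply (Wmax a Nm Nf R0 lamS B1 B2 w1 w2 _ _ Halpha HNm HNf HR0 HlamS HBt); auto. unfold B1, B2 in *; lra. lra. }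
      lra.
    + assert (HlF : SW a Nm Nf R0 lamS B1 B2 B1n B2n <= SWw).
      { apply Hw2. split; split; unfold B1, B2; lra. }
      assert (HSWw : SWw <= SW a Nm Nf R0 lamS B1 B2 B1n B2n).
      { rewrite <- Ew. destruct Fw as [[? ?] [? ?]].
        destruct (Req_dec (w1 + w2) (B1n + B2n)) as [E|E].
        - right. apply SW_sum; auto.
        - left. assert (B1n + B2n < w1 + w2) by (destruct (Rle_lt_or_eq_dec (B1n + B2n) (w1 + w2) ltac:(lra)) as [?|Hq]; [auto|exfalso; apply E; auto]).
          apply (Wdec a Nm Nf R0 lamS B1 B2); auto.
          all: fold ss; lra. }
      split.
      * intros Heq.
        assert (Hsum : x1 + x2 = B).
        { destruct (Rle_dec (x1 + x2) B) as [|Hn]; [lra|]. exfalso.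
          assert (SW a Nm Nf R0 lamS B1 B2 x1 x2 < SW a Nm Nf R0 lamS B1 B2 B1n B2n).
          { apply (Wdec a Nm Nf R0 lamS B1 B2); auto; fold ss; lra. }
          lra. }
        assert (Ex1 : x1 = B1n) by lra. assert (Ex2 : x2 = B2n) by lra.
        assert (HM : 0 < B1 - x1 + (B2 - x2)) by (unfold B1, B2; lra).
        assert (Hx1B : x1 < B1) by (unfold B1; lra).
        assert (Hx2B : x2 < B2) by (unfold B2; lra).
        pose proof (NE_foc_down _ _ _ _ _ _ _ _ _ _ _ HNm HNf HR0 HlamS HNE ltac:(lra) HM Hx1B) as G1n.
        assert (HM' : 0 < B2 - x2 + (B1 - x1)) by lra.
        assert (Hs' : 0 < x2 + x1) by lra.
        pose proof (NE_foc_down _ _ _ _ _ _ _ _ _ _ _ HNm HNf HR0 HlamS HNE' Hs' HM' Hx2B) as G2n.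
        rewrite Ex1, Ex2 in G1n, G2n. auto.
      * intros [D1 D2].
        assert (Hs0 : 0 < x1 + x2) by lra.
        assert (HM : 0 < B1 - x1 + (B2 - x2)) by lra.
        assert (Hx : x1 = B1n /\ x2 = B2n).
        { destruct (Rle_lt_or_eq_dec B1n x1 ltac:(lra)) as [L1|L1];
          destruct (Rle_lt_or_eq_dec B2n x2 ltac:(lra)) as [L2|L2].
          - exfalso.
            pose proof (NE_foc_up _ _ _ _ _ _ _ _ _ _ _ HNm HNf HR0 HlamS HNE Hs0 HM L1) as Ga.
            assert (HM' : 0 < B2 - x2 + (B1 - x1)) by lra.
            assert (Hs' : 0 < x2 + x1) by lra.
            pose proof (NE_foc_up _ _ _ _ _ _ _ _ _ _ _ HNm HNf HR0 HlamS HNE' Hs' HM' L2) as Gb.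
            pose proof (G_sum a Nm Nf R0 lamS B1 B2 x1 x2 HNm HNf HR0 HlamS Hs0 HM) as GS.
            pose proof (phi_neg a Nm Nf R0 lamS (B1 + B2) (x1 + x2) Halpha HNm HNf HR0 HlamS HBt ltac:(fold ss; lra) HsBt).
            nra.
          - exfalso. apply (part1_aux a Nm Nf R0 lamS B2 B1 B2n B1n x2 x1); auto; lra.
          - exfalso. apply (part1_aux a Nm Nf R0 lamS B1 B2 B1n B2n x1 x2); auto; lra.
          - auto. }
        destruct Hx as [Ex1 Ex2]. rewrite Ex1, Ex2. lra.
  - intros HTB. apply HT in HTB.
    set (t2 := (ss - B) / (B1o + B2o)).
    assert (Ht2 : 0 <= t2 <= 1).
    { unfold t2. split. unfold Rdiv; apply Rmult_le_pos; [lra|left; apply Rinv_0_lt_compat; lra].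
      apply Rmult_le_reg_r with (B1o + B2o); [lra|]. unfold Rdiv; rewrite Rmult_assoc, Rinv_l, Rmult_1_r, Rmult_1_l; lra. }
    set (q1 := B1n + t2 * B1o). set (q2 := B2n + t2 * B2o).
    assert (Hq : q1 + q2 = ss).
    { unfold q1, q2, t2. rewrite <- Hsplit. field. lra. }
    assert (HqF : SW a Nm Nf R0 lamS B1 B2 q1 q2 <= SWw).
    { apply Hw2. unfold q1, q2, B1, B2; split; split; nra. }
    assert (HwF : SWw <= SWwo).
    { rewrite <- Ew. apply Hwo2. destruct Fw as [[? ?] [? ?]]. split; split; lra. }
    assert (Eq : SW a Nm Nf R0 lamS B1 B2 (th * B1) (th * B2) = SW a Nm Nf R0 lamS B1 B2 q1 q2)
      by (apply SW_sum; lra).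
    assert (HSWwo : SWwo = SW a Nm Nf R0 lamS B1 B2 q1 q2) by lra.
    split; [auto|]. split; [lra|].
    split.
    + intros Heq.
      assert (Hs : x1 + x2 = ss).
      { destruct (Req_dec (x1 + x2) ss) as [|Hn]; auto. exfalso.
        assert (SW a Nm Nf R0 lamS B1 B2 x1 x2 < SW a Nm Nf R0 lamS B1 B2 q1 q2).
        { apply (Wmax a Nm Nf R0 lamS B1 B2 x1 x2 q1 q2 Halpha HNm HNf HR0 HlamS HBt); auto. lra. lra. }
        lra. }
      pose proof (prop_at_star a Nm Nf R0 lamS B1 B2 B1n B2n x1 x2 Halpha HNm HNf HR0 HlamS HBt HB1n HB2n HNE Hs) as P1.
      assert (HBt2 : 0 < B2 + B1) by lra.
      assert (Hs2 : x2 + x1 = sstar a Nm Nf lamS (B2 + B1)) by (rewrite Hss'; lra).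
      pose proof (prop_at_star a Nm Nf R0 lamS B2 B1 B2n B1n x2 x1 Halpha HNm HNf HR0 HlamS HBt2 HB2n HB1n HNE' Hs2) as P2.
      set (M := B1 + B2 - ss).
      assert (HM : 0 < M) by (unfold M; lra).
      assert (HssM : ss = k * M) by (unfold M; lra).
      replace (B1 - x1 + (B2 - x2)) with M in P1 by (unfold M; lra).
      replace (B2 - x2 + (B1 - x1)) with M in P2 by (unfold M; lra).
      rewrite Hs, HssM in P1. replace (x2 + x1) with (x1 + x2) in P2 by ring. rewrite Hs, HssM in P2.
      assert (Q1 : x1 <= k * (B1 - x1)).
      { apply Rmult_le_reg_r with M; auto. lra. }
      assert (Q2 : x2 <= k * (B2 - x2)).
      { apply Rmult_le_reg_r with M; auto. lra. }
      unfold B1 in Q1. unfold B2 in Q2.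
      destruct FN1 as [FN1 _]. destruct FN2 as [FN2 _].
      assert (B1n <= k * B1o).
      { assert (k * (B1o + B1n - x1) <= k * (B1o + B1n - B1n)) by (apply Rmult_le_compat_l; lra). nra. }
      assert (B2n <= k * B2o).
      { assert (k * (B2o + B2n - x2) <= k * (B2o + B2n - B2n)) by (apply Rmult_le_compat_l; lra). nra. }
      split; [lra|]. split; lra.
    + intros [C1 [C2 C3]].
      assert (L1 : B1n <= k * (B1 - B1n)) by (unfold B1; replace (B1o + B1n - B1n) with B1o by ring; lra).
      assert (L2 : B2n <= k * (B2 - B2n)) by (unfold B2; replace (B2o + B2n - B2n) with B2o by ring; lra).
      assert (Hs0 : 0 < x1 + x2).
      { destruct (Rlt_dec 0 (x1 + x2)) as [|Hn]; auto. exfalso.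
        apply (NE_not_zero a Nm Nf R0 lamS B1 B2 B1n B2n x1 x2 Halpha HNm HNf HR0 HlamS HB1 HB2 HNE); lra. }
      assert (HM : 0 < B1 - x1 + (B2 - x2)) by lra.
      assert (Hs : x1 + x2 = ss).
      { destruct (Rtotal_order (x1 + x2) ss) as [Hlt|[Heq|Hgt]]; auto; exfalso.
        - pose proof (G_sum a Nm Nf R0 lamS B1 B2 x1 x2 HNm HNf HR0 HlamS Hs0 HM) as GS.
          pose proof (phi_pos a Nm Nf R0 lamS (B1 + B2) (x1 + x2) Halpha HNm HNf HR0 HlamS HBt Hs0 Hlt) as Ph.
          destruct (Rlt_dec 0 (G1 a Nm Nf R0 lamS B1 B2 x1 x2)) as [Hg|Hg].
          + apply (ge_star_aux a Nm Nf R0 lamS B1 B2 B1n B2n x1 x2); auto.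
          + assert (0 < G1 a Nm Nf R0 lamS B2 B1 x2 x1) by nra.
            apply (ge_star_aux a Nm Nf R0 lamS B2 B1 B2n B1n x2 x1); auto; try lra.
        - pose proof (G_sum a Nm Nf R0 lamS B1 B2 x1 x2 HNm HNf HR0 HlamS Hs0 HM) as GS.
          pose proof (phi_neg a Nm Nf R0 lamS (B1 + B2) (x1 + x2) Halpha HNm HNf HR0 HlamS HBt Hgt HsBt) as Ph.
          destruct (Rlt_dec (G1 a Nm Nf R0 lamS B1 B2 x1 x2) 0) as [Hg|Hg].
          + apply (le_star_aux a Nm Nf R0 lamS B1 B2 B1n B2n x1 x2); auto; fold ss; lra.
          + assert (G1 a Nm Nf R0 lamS B2 B1 x2 x1 < 0) by nra.
            apply (le_star_aux a Nm Nf R0 lamS B2 B1 B2n B1n x2 x1); auto; try rewrite Hss'; lra. }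
      rewrite HSWwo. apply SW_sum. lra.
Qed.
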